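(* Let $P$ be a finite set of predicates, let $\eta = \sigma_1,\ldots,\sigma_n$ be a trace over the alphabet $\Sigma = 2^P$ (so each $\sigma_i \subseteq P$), and let $\varphi$ be an LTLf formula over $P$. Run the query-processing algorithm described in the context on $\eta$ and $\varphi$. If some contiguous sub-trace $\sigma_k,\ldots,\sigma_\ell$ ($1 \le k \le \ell \le n$) of $\eta$ satisfies $\varphi$, then the algorithm returns a contiguous sub-trace $\sigma_k,\ldots,\sigma_\ell$ of $\eta$ with $(\sigma_k,\ldots,\sigma_\ell) \models \varphi$. Moreover, the algorithm processes (reads) $\eta$ at most twice: once forward and at most once backward.
   Context: LTLf syntax over a finite set of predicates $P$: each $p\in P$ is a formula; if $\varphi_1,\varphi_2$ are formulas then so are $\varphi_1\wedge\varphi_2$, $\neg\varphi_1$, $X\varphi_1$ (''next'') and $\varphi_1 U \varphi_2$ (''until''); $F\varphi$ abbreviates $\texttt{True}\, U\, \varphi$. Semantics: for a finite nonempty trace $\eta=\sigma_1,\ldots,\sigma_k$ with $\sigma_i\subseteq P$: $\eta\models p$ iff $p\in\sigma_1$; $\eta\models\varphi_1\wedge\varphi_2$ iff $\eta\models\varphi_1$ and $\eta\models\varphi_2$; $\eta\models\neg\varphi_1$ iff $\eta\not\models\varphi_1$; $\eta\models X\varphi_1$ iff $(\sigma_2,\ldots,\sigma_k)\models\varphi_1$; $\eta\models\varphi_1 U\varphi_2$ iff there is $1\le i\le k$ with $(\sigma_i,\ldots,\sigma_k)\models\varphi_2$ and for each $1\le j\le i$, $(\sigma_j,\ldots,\sigma_k)\models\varphi_1$.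 A DFA is $\mathcal{A}=\langle\Sigma,Q,\delta,q_0,Acc\rangle$ with transition function $\delta:Q\times\Sigma\to Q$, initial state $q_0$, accepting states $Acc\subseteq Q$; it accepts a finite word if its run from $q_0$ ends in $Acc$. It is known (and may be assumed) that for every LTLf formula $\psi$ over $P$ there is a DFA $\mathcal{A}_\psi$ over $2^P$ accepting exactly the traces satisfying $\psi$. The algorithm: construct DFAs $\mathcal{A}_\varphi$ and $\mathcal{A}_{F\varphi}$ (with $\mathcal{A}_\varphi=\langle 2^P,Q,\delta,q_0,Acc\rangle$). Feed $\eta$ letter by letter (forward) to $\mathcal{A}_{F\varphi}$ until it first visits an accepting state, say after reading $\sigma_\ell$; if this never happens, report that no sub-trace exists. Otherwise read $\eta$ backward starting from $\sigma_\ell$, maintaining a set $Q'\subseteq Q$ initialized to $Acc$; upon reading a letter $\sigma$, update $Q' := \{q\in Q : \exists q'\in Q' \text{ with } q'=\delta(q,\sigma)\}$; stop as soon as $q_0\in Q'$, say after reading $\sigma_k$, and return $\sigma_k,\ldots,\sigma_\ell$. *)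

(* Defs.v *)
From mathcomp Require Import all_boot.
Set Implicit Arguments. Unset Strict Implicit. Unset Printing Implicit Defensive.

Section LTLf.
Variable P : finType.

Definition letter := {set P}.

Inductive ltlf : Type :=
| LTrue
| Atom of P
| And of ltlf & ltlf
| Not of ltlf
| Next of ltlf
| Until of ltlf & ltlf.

Definition Fin (f : ltlf) : ltlf := Until LTrue f.

(* Semantics on finite traces (only meaningful for nonempty traces). *)
Fixpoint sat (w : seq letter) (f : ltlf) : bool :=
  match f with
  | LTrue => true
  | Atom p => if w is a :: _ then p \in a else false
  | And f1 f2 => sat w f1 && sat w f2
  | Not f1 => ~~ sat w f1
  | Next f1 => (1 < size w) && sat (behead w) f1
  | Until f1 f2 =>
      has (fun i => sat (drop i w) f2 &&
                    all (fun j => sat (drop j w) f1) (iota 0 i.+1))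
          (iota 0 (size w))
  end.

Record dfa : Type := Dfa {
  dstate : finType;
  ddelta : dstate -> letter -> dstate;
  dinit : dstate;
  dacc : {set dstate}
}.

Definition run (A : dfa) (q : dstate A) (w : seq letter) : dstate A :=
  foldl (ddelta (d:=A)) q w.

Definition accepts (A : dfa) (w : seq letter) : bool :=
  run (dinit A) w \in dacc A.

(* contiguous sub-trace sigma_k..sigma_l (0-based indices, inclusive) *)
Definition subtrace (eta : seq letter) (k l : nat) : seq letter :=
  drop k (take l.+1 eta).

Fixpoint fwd_pass (A : dfa) (q : dstate A) (i : nat) (s : seq letter)
  : option nat * seq nat :=
  match s with
  | [::] => (None, [::])
  | a :: s' =>
      let q' := ddelta q a in
      if q' \in dacc A then (Some i, [:: i])
      else let: (r, lg) := fwd_pass q' i.+1 s' in (r, i :: lg)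
  end.

Fixpoint bwd_pass (A : dfa) (Q' : {set dstate A}) (rs : seq (nat * letter))
  : option nat * seq nat :=
  match rs with
  | [::] => (None, [::])
  | (j, a) :: rs' =>
      let Q'' := [set q | ddelta q a \in Q'] in
      if dinit A \in Q'' then (Some j, [:: j])
      else let: (r, lg) := bwd_pass Q'' rs' in (r, j :: lg)
  end.

Record alg_out : Type := AlgOut {
  result : option (nat * nat);   (* Some (k, l): returns subtrace eta k l *)
  fwd_log : seq nat;              (* positions read in the forward pass *)
  bwd_log : seq nat               (* positions read in the backward pass *)
}.

Definition algorithm (Aphi AFphi : dfa) (eta : seq letter) : alg_out :=
  let: (ol, flog) := fwd_pass (dinit AFphi) 0 eta in
  match ol with
  | None => AlgOut None flog [::]
  | Some l =>
      let rs := rev (zip (iota 0 l.+1) (take l.+1 eta)) in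
      let: (ok, blog) := bwd_pass (dacc Aphi) rs in
      match ok with
      | None => AlgOut None flog blog
      | Some k => AlgOut (Some (k, l)) flog blog
      end
  end.

End LTLf.

(* Main.v *)
Require Import Defs.
From mathcomp Require Import all_boot.

Lemma fwd_spec (P : finType) (A : dfa P) q i (s : seq (letter P)) :
  match fwd_pass q i s with
  | (None, lg) => lg = iota i (size s) /\
      forall m, m < size s -> run q (take m.+1 s) \notin dacc A
  | (Some l, lg) => exists m, [/\ m < size s, l = i + m, lg = iota i m.+1
                                & run q (take m.+1 s) \in dacc A]
  end.
Proof.
elim: s q i => [|a s IH] q i /=; first by split.
case: ifP => Hq.
  by exists 0; rewrite addn0 /run /= take0 /=.
have := IH (ddelta q a) i.+1.
case: (fwd_pass _ _ s) => [[l|] lg].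
  case=> m [Hm -> -> Hacc]; exists m.+1; split => //.
  by rewrite addSnnS.
case=> -> H; split => //.
case => [|m] /=; first by rewrite /run /= take0 /= Hq.
exact: H.
Qed.

Lemma bwd_spec (P : finType) (A : dfa P) (Q : {set dstate A})
  (s : seq (nat * letter P)) :
  match bwd_pass Q (rev s) with
  | (None, lg) => lg = rev (map fst s) /\
      forall k, k < size s -> run (dinit A) (map snd (drop k s)) \notin Q
  | (Some j, lg) => exists k, [/\ k < size s, j = (nth (0, set0) s k).1,
      lg = rev (map fst (drop k s)) & run (dinit A) (map snd (drop k s)) \in Q]
  end.
Proof.
elim/last_ind: s Q => [|s [j a] IH] Q /=; first by split.
rewrite rev_rcons /=.
case: ifP => Hin.
  exists (size s); rewrite size_rcons ltnSn nth_rcons ltnn eqxx.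
  rewrite drop_rcons // drop_size /=; split => //.
  by rewrite inE in Hin.
have := IH [set q | ddelta q a \in Q].
case: bwd_pass => [[j'|] lg].
  case=> k [Hk -> -> Hrun]; exists k; split.
  - by rewrite size_rcons; apply: leqW.
  - by rewrite nth_rcons Hk.
  - by rewrite drop_rcons ?(ltnW Hk) // map_rcons rev_rcons.
  - by rewrite drop_rcons ?(ltnW Hk) // map_rcons /run foldl_rcons; rewrite inE in Hrun.
case=> -> H; split; first by rewrite map_rcons rev_rcons.
move=> k; rewrite size_rcons ltnS leq_eqVlt; case/orP => [/eqP->| Hk].
  by rewrite drop_rcons // drop_size /= /run /=; rewrite inE in Hin; rewrite Hin.
rewrite drop_rcons ?(ltnW Hk) // map_rcons /run foldl_rcons.
by have := H k Hk; rewrite inE.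
Qed.

Lemma satF (P : finType) (w : seq (letter P)) f :
  sat w (Fin f) = has (fun i => sat (drop i w) f) (iota 0 (size w)).
Proof.
rewrite /=; apply: eq_has => i /=.
have -> : forall s : seq nat, all (fun _ => true) s = true by elim.
by rewrite andbT.
Qed.

Lemma logs_ok n a b c d : a + b <= n -> c + d <= n ->
  sorted ltn (iota a b) /\ sorted gtn (rev (iota c d)) /\
  all (fun i => i < n) (iota a b ++ rev (iota c d)) /\
  forall i, count_mem i (iota a b ++ rev (iota c d)) <= 2.
Proof.
move=> Hab Hcd; split; first exact: iota_ltn_sorted.
split; first by rewrite rev_sorted; exact: iota_ltn_sorted.
split.
  rewrite all_cat all_rev; apply/andP; split; apply/allP => x;
  rewrite mem_iota => /andP[_ Hx].
    exact: leq_trans Hx Hab.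
  exact: leq_trans Hx Hcd.
move=> i; rewrite count_cat count_rev !count_uniq_mem ?iota_uniq //.
by case: (_ \in _); case: (_ \in _).
Qed.

Lemma take_ne (P : finType) (eta : seq (letter P)) l :
  l < size eta -> take l.+1 eta != [::].
Proof. by move=> Hl; rewrite -size_eq0 size_takel ?Hl. Qed.

Lemma sub_ne (P : finType) (eta : seq (letter P)) k l :
  k <= l -> l < size eta -> drop k (take l.+1 eta) != [::].
Proof.
move=> Hk Hl; rewrite -size_eq0 size_drop size_takel ?Hl //. by rewrite -lt0n subn_gt0 ltnS.
Qed.

Theorem mainTheorem1 (P : finType) (eta : seq (letter P)) (phi : ltlf P)
    (Aphi AFphi : dfa P)
    (HAphi : forall w : seq (letter P), w != [::] ->
               accepts Aphi w = sat w phi)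
    (HAFphi : forall w : seq (letter P), w != [::] ->
               accepts AFphi w = sat w (Fin phi)) :
  let out := algorithm Aphi AFphi eta in
  ((exists k l, k <= l < size eta /\ sat (subtrace eta k l) phi) ->
     exists k l, result out = Some (k, l) /\
       k <= l < size eta /\ sat (subtrace eta k l) phi)
  /\ (sorted ltn (fwd_log out) /\ sorted gtn (bwd_log out) /\
      all (fun i => i < size eta) (fwd_log out ++ bwd_log out) /\
      forall i, count_mem i (fwd_log out ++ bwd_log out) <= 2).
Proof.
move=> out; rewrite /out /algorithm.
have := @fwd_spec P AFphi (dinit AFphi) 0 eta.
case: (fwd_pass _ 0 eta) => [[l|] flog]; last first.
  case=> -> Hnone /=; split; last first.
    by have := @logs_ok (size eta) 0 (size eta) 0 0; rewrite add0n addn0; apply.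
  case=> k0 [l0 [/andP[Hk0 Hl0] Hsat]].
  have := Hnone l0 Hl0.
  rewrite -[_ \in _]/(accepts AFphi (take l0.+1 eta)) HAFphi ?take_ne // satF.
  case/negP; apply/hasP; exists k0 => //.
  by rewrite mem_iota add0n size_takel ?Hl0 // ltnS.
case=> m [Hm -> -> Hacc]; rewrite add0n.
set s := zip (iota 0 m.+1) (take m.+1 eta).
have Hsz : size (take m.+1 eta) = m.+1 by rewrite size_takel.
have Hfst : map fst s = iota 0 m.+1 by rewrite /s -/(unzip1 _) unzip1_zip // size_iota Hsz.
have Hsnd : map snd s = take m.+1 eta by rewrite /s -/(unzip2 _) unzip2_zip // size_iota Hsz.
have Hssz : size s = m.+1 by rewrite /s size_zip size_iota Hsz minnn.
have Hacc' : sat (take m.+1 eta) (Fin phi).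
  by rewrite -HAFphi ?take_ne.
have := @bwd_spec P Aphi (dacc Aphi) s.
case: bwd_pass => [[k|] blog].
  case=> k' [Hk -> -> Hrun].
  rewrite map_drop Hsnd in Hrun.
  rewrite Hssz in Hk.
  have -> : (nth (0, set0) s k').1 = k'.
    by rewrite /s nth_zip ?size_iota ?Hsz // (nth_iota 0 0 Hk).
  rewrite map_drop Hfst drop_iota add0n.
  split.
    move=> _; exists k', m; split => //; split; first by rewrite -ltnS Hk Hm.
    by rewrite /subtrace -HAphi ?sub_ne.
  apply: (@logs_ok (size eta) 0 m.+1 k' (m.+1 - k')); first by rewrite add0n.
  by rewrite subnKC // ltnW.
case=> -> H; split; last first.
  by rewrite Hfst; apply: (@logs_ok (size eta) 0 m.+1 0 m.+1); rewrite add0n.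
move=> _; exfalso.
move: Hacc'; rewrite satF Hsz => /hasP[i]; rewrite mem_iota add0n => Hi Hsi.
have := H i; rewrite Hssz map_drop Hsnd => /(_ Hi).
rewrite -[_ \in _]/(accepts Aphi _) HAphi ?Hsi //.
by apply: sub_ne => //; rewrite -ltnS.
Qed.
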